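(* Let $(\beta,\lambda)\in\mathcal T$, $J\ge2$, and $0\le\eta<1-1/J$. Let $\bm\theta^*_{\beta,\lambda}$ be a global minimizer over $\Theta$ of the clean expected SD-loss $R_{\beta,\lambda}$ and $\bm\theta^\eta_{\beta,\lambda}$ a global minimizer over $\Theta$ of the noisy expected SD-loss $R^\eta_{\beta,\lambda}$ (both assumed to exist). Then $$0\le R_{\beta,\lambda}(\bm\theta^\eta_{\beta,\lambda})-R_{\beta,\lambda}(\bm\theta^*_{\beta,\lambda})\le M^{(\eta)}_{\beta,\lambda}:=\frac{\eta}{J-1-J\eta}\cdot\frac1A\Big(J-J^{1-\beta}+\frac{1+\beta}{B}\big|1-J^{1-B}\big|\Big).$$
   Context: $\ell_{\beta,\lambda}(\bm u,\bm p)=\frac1A\sum_{j=1}^J[p_j^{1+\beta}-\frac{1+\beta}{B}u_jp_j^B+\frac AB]$ with $A=1+\lambda(1-\beta)$, $B=\beta-\lambda(1-\beta)$, and $\mathcal T=\{(\beta,\lambda):0\le\beta<1,-\frac1{1-\beta}<\lambda<\frac\beta{1-\beta}\}\cup\{(1,\lambda):\lambda\in\mathbb R\}$ (so $A,B>0$). Features $\bm X\sim G_{\bm X}$; the clean one-hot label $\bm Y\in\{\bm e_1,\dots,\bm e_J\}$ given $\bm X=\bm x$ is Multinomial$(1;\bm p^*(\bm x))$. Under uniform label noise of level $\eta$, the observed label $\widetilde{\bm Y}$ given $\bm X=\bm x$ equals $\bm e_j$ with probability $(1-\eta)p_j^*(\bm x)+\frac{\eta}{J-1}(1-p_j^*(\bm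 x))$ (i.e. the true label is kept with probability $1-\eta$ and otherwise replaced uniformly by one of the other $J-1$ labels). $R_{\beta,\lambda}(\bm\theta)=E[\ell_{\beta,\lambda}(\bm Y,\bm p(\bm X;\bm\theta))]$ and $R^\eta_{\beta,\lambda}(\bm\theta)=E[\ell_{\beta,\lambda}(\widetilde{\bm Y},\bm p(\bm X;\bm\theta))]$, where $\bm p(\bm x;\bm\theta)\in\Delta_J$ are softmax network class probabilities, $\bm\theta\in\Theta$. *)

(* Defs.v *)
From HB Require Import structures.
From mathcomp Require Import all_boot all_order all_algebra.
From mathcomp Require Import all_classical all_reals all_analysis.
Set Implicit Arguments. Unset Strict Implicit. Unset Printing Implicit Defensive.
Import Order.TTheory GRing.Theory Num.Theory.
Local Open Scope ring_scope.

Definition SD_A {R : realType} (beta lambda : R) : R := 1 + lambda * (1 - beta).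
Definition SD_B {R : realType} (beta lambda : R) : R := beta - lambda * (1 - beta).

Definition in_T {R : realType} (beta lambda : R) : Prop :=
  (0 <= beta /\ beta < 1 /\ - (1 - beta)^-1 < lambda /\ lambda < beta / (1 - beta))
  \/ beta = 1.

Definition SD_loss {R : realType} (J : nat) (beta lambda : R) (u p : 'I_J -> R) : R :=
  (SD_A beta lambda)^-1 *
  \sum_(j < J) (p j `^ (1 + beta)
                - (1 + beta) / SD_B beta lambda * u j * p j `^ (SD_B beta lambda)
                + SD_A beta lambda / SD_B beta lambda).

Definition onehot {R : realType} (J : nat) (k : 'I_J) : 'I_J -> R :=
  fun j => (j == k)%:R.

Definition softmax {R : realType} (J : nat) (z : 'I_J -> R) : 'I_J -> R :=
  fun j => expR (z j) / \sum_(k < J) expR (z k).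

Definition noisy_prob {R : realType} (J : nat) (eta : R) (q : 'I_J -> R) : 'I_J -> R :=
  fun j => (1 - eta) * q j + eta / (J - 1)%:R * (1 - q j).

(* expected SD-loss E[l(Y, p(X))] where X ~ P and Y | X = x ~ Multinomial(1; q x) *)
Definition exp_risk {R : realType} (d : measure_display) (T : measurableType d)
  (P : probability T R) (J : nat) (beta lambda : R)
  (q : T -> 'I_J -> R) (p : T -> 'I_J -> R) : \bar R :=
  (\int[P]_x (\sum_(k < J) q x k * SD_loss beta lambda (onehot k) (p x))%:E)%E.

Definition M_bound {R : realType} (J : nat) (beta lambda eta : R) : R :=
  eta / ((J%:R - 1) - J%:R * eta) *
  ((SD_A beta lambda)^-1 *
   (J%:R - J%:R `^ (1 - beta)
    + (1 + beta) / SD_B beta lambda * `|1 - J%:R `^ (1 - SD_B beta lambda)|)).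

(* Main.v *)
Require Import Defs.
From HB Require Import structures.
From mathcomp Require Import all_boot all_order all_algebra.
From mathcomp Require Import all_classical all_reals all_analysis.
From mathcomp Require Import measurable_realfun.
From mathcomp Require Import ring lra.
Import Order.TTheory GRing.Theory Num.Theory.
Local Open Scope ring_scope.
Ltac nzs := repeat (apply/andP; split); apply/eqP => ?; lra.

Section Aux.
Variable R : realType.

Lemma bern_ge (s y : R) : 1 <= s -> 0 < y -> 1 + s * (y - 1) <= y `^ s.
Proof.
move=> s1 y0; have [s1'|s1'] := eqVneq s 1.
  rewrite s1' powRr1; lra.
have sg1 : 1 < s by rewrite lt_neqAle eq_sym s1' s1.
have s0 : 0 < s by lra.
have s10 : 0 < s - 1 by lra.
have q0 : 0 < s / (s - 1) by rewrite divr_gt0.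
have := @conjugate_powR R y 1 s (s / (s - 1)) (ltW y0) ler01 s0 q0.
rewrite invf_div powR1 mulr1.
have -> : s^-1 + (s - 1) / s = 1 by field; nzs.
move=> /(_ erefl) H.
rewrite -(ler_pM2l s0) in H.
have E : s * (y `^ s / s + 1 * ((s - 1) / s)) = y `^ s + (s - 1) by field; nzs.
rewrite E in H; lra.
Qed.

Lemma bern_le (t z : R) : 0 <= t <= 1 -> 0 < z -> z `^ t <= 1 + t * (z - 1).
Proof.
move=> /andP[t0 t1] z0.
have [->|t0'] := eqVneq t 0; first by rewrite powRr0; lra.
have [->|t1'] := eqVneq t 1; first by rewrite powRr1; lra.
have tp : 0 < t by rewrite lt_neqAle eq_sym t0' t0.
have tl : t < 1 by rewrite lt_neqAle t1' t1.
have p0 : 0 < t^-1 by rewrite invr_gt0.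
have q0 : 0 < (1 - t)^-1 by rewrite invr_gt0; lra.
have := @conjugate_powR R (z `^ t) 1 t^-1 (1 - t)^-1 (powR_ge0 _ _) ler01 p0 q0.
rewrite !invrK powR1 mulr1 -powRrM mulfV; last exact: lt0r_neq0.
rewrite powRr1; last exact: ltW.
have e : t + (1 - t) = 1 by ring.
move=> /(_ e) H.
have -> : 1 + t * (z - 1) = z * t + 1 * (1 - t) by ring.
exact: H.
Qed.

Variable J : nat.
Hypothesis J0 : (0 < J)%N.

Let J0R : (0 : R) < J%:R. Proof. by rewrite ltr0n. Qed.

Lemma le1_of_sum (q : 'I_J -> R) j : (forall i, 0 <= q i) -> \sum_i q i = 1 -> q j <= 1.
Proof.
move=> q0 q1; rewrite -q1 (bigD1 j) //= lerDl sumr_ge0 //.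
Qed.

Lemma scale_sum (q : 'I_J -> R) s : (forall i, 0 < q i) ->
  J%:R `^ s * \sum_i q i `^ s = \sum_i (J%:R * q i) `^ s.
Proof.
move=> q0; rewrite mulr_sumr; apply: eq_bigr => i _.
by rewrite powRM // ltW.
Qed.

Lemma sum_lin (q : 'I_J -> R) s : \sum_i q i = 1 ->
  \sum_i (1 + s * (J%:R * q i - 1)) = J%:R.
Proof.
move=> q1; rewrite big_split /= sumr_const card_ord -mulr_sumr sumrB -mulr_sumr q1.
rewrite sumr_const card_ord; rewrite -[1 *+ J]/(J%:R); ring.
Qed.

Lemma sum_pow_ge1 (q : 'I_J -> R) s : (forall i, 0 < q i) -> \sum_i q i = 1 ->
  1 <= s -> J%:R `^ (1 - s) <= \sum_i q i `^ s /\ \sum_i q i `^ s <= 1.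
Proof.
move=> q0 q1 s1; split.
  have Js : 0 < J%:R `^ s by rewrite powR_gt0.
  rewrite powRB; last by apply/implyP => _; rewrite lt0r_neq0.
  rewrite powRr1 ?ler0n // ler_pdivrMr // mulrC scale_sum //.
  rewrite -{1}(sum_lin q s q1); apply: ler_sum => i _; apply: bern_ge => //.
  by rewrite mulr_gt0.
rewrite -q1; apply: ler_sum => i _.
apply: ge1r_powR => //; rewrite q0 /=; apply: le1_of_sum => // k; exact: ltW.
Qed.

Lemma sum_pow_le1 (q : 'I_J -> R) s : (forall i, 0 < q i) -> \sum_i q i = 1 ->
  0 <= s <= 1 -> 1 <= \sum_i q i `^ s /\ \sum_i q i `^ s <= J%:R `^ (1 - s).
Proof.
move=> q0 q1 /andP[s0 s1]; split.
  rewrite -{1}q1; apply: ler_sum => i _.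
  apply: ger1_powR => //; rewrite q0 /=; apply: le1_of_sum => // k; exact: ltW.
have Js : 0 < J%:R `^ s by rewrite powR_gt0.
rewrite powRB; last by apply/implyP => _; rewrite lt0r_neq0.
rewrite powRr1 ?ler0n // ler_pdivlMr // mulrC scale_sum //.
rewrite -[X in _ <= X](sum_lin q s q1); apply: ler_sum => i _; apply: bern_le; first by rewrite s0 s1.
by rewrite mulr_gt0.
Qed.

End Aux.

Section Loss.
Variable R : realType.
Variables (J : nat) (beta lambda : R).
Local Notation A := (SD_A beta lambda).
Local Notation B := (SD_B beta lambda).

Lemma loss_onehot (p : 'I_J -> R) k : SD_loss beta lambda (onehot k) p =
  A^-1 * (\sum_j (p j `^ (1 + beta) + A / B) - (1 + beta) / B * p k `^ B).
Proof.
rewrite /SD_loss; congr (_ * _).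
have -> : \sum_j (p j `^ (1 + beta) - (1 + beta) / B * onehot k j * p j `^ B + A / B)
  = \sum_j (p j `^ (1 + beta) + A / B) - \sum_j ((1 + beta) / B * onehot k j * p j `^ B).
  by rewrite -sumrB; apply: eq_bigr => j _; ring.
congr (_ - _); rewrite (bigD1 k) //= /onehot eqxx mulr1 big1 ?addr0 // => j /negbTE ->.
by rewrite mulr0 mul0r.
Qed.

Lemma sum_loss (p : 'I_J -> R) : \sum_k SD_loss beta lambda (onehot k) p =
  A^-1 * (J%:R * \sum_j p j `^ (1 + beta) + J%:R * J%:R * (A / B)
          - (1 + beta) / B * \sum_k p k `^ B).
Proof.
under eq_bigr do rewrite loss_onehot.
rewrite -mulr_sumr sumrB sumr_const card_ord big_split /= sumr_const card_ord -mulr_sumr.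
congr (_ * _); ring.
Qed.

Lemma u_diff (p p' : 'I_J -> R) : (0 < J)%N -> 0 < A -> 0 < B -> 0 <= beta <= 1 ->
  (forall i, 0 < p i) -> \sum_i p i = 1 ->
  (forall i, 0 < p' i) -> \sum_i p' i = 1 ->
  \sum_k SD_loss beta lambda (onehot k) p - \sum_k SD_loss beta lambda (onehot k) p'
  <= A^-1 * (J%:R - J%:R `^ (1 - beta)
    + (1 + beta) / B * `|1 - J%:R `^ (1 - B)|).
Proof.
move=> J0 A0 B0 /andP[b0 b1] p0 p1 p'0 p'1.
rewrite !sum_loss -mulrBr; apply: ler_wpM2l; first by rewrite invr_ge0 ltW.
have s1 : 1 <= 1 + beta by lra.
have [S1 _] := @sum_pow_ge1 R J J0 _ _ p'0 p'1 s1.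
have [_ S2] := @sum_pow_ge1 R J J0 _ _ p0 p1 s1.
have JJ : J%:R * J%:R `^ (1 - (1 + beta)) = J%:R `^ (1 - beta) :> R.
  rewrite -{1}(@powRr1 _ J%:R) ?ler0n // -powRD; last first.
    by apply/implyP => _; rewrite pnatr_eq0 -lt0n.
  congr (_ `^ _); ring.
have J0R : (0:R) <= J%:R by rewrite ler0n.
have H1 : J%:R * J%:R `^ (1 - (1 + beta)) <= J%:R * \sum_j p' j `^ (1 + beta).
  exact: ler_wpM2l.
have H2 : J%:R * \sum_j p j `^ (1 + beta) <= J%:R * 1 by exact: ler_wpM2l.
rewrite JJ in H1.
set N := `|1 - J%:R `^ (1 - B)|.
have N1 : 1 - J%:R `^ (1 - B) <= N by exact: ler_norm.
have N2 : J%:R `^ (1 - B) - 1 <= N by rewrite /N distrC ler_norm.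
have c0 : 0 <= (1 + beta) / B by rewrite divr_ge0 // ?ltW //; lra.
have HT : \sum_k p' k `^ B - \sum_k p k `^ B <= N.
  have [Bl|Bg] := lerP B 1.
    have [T1 T2] := @sum_pow_le1 R J J0 _ B p0 p1 ltac:(rewrite Bl ltW //).
    have [T3 T4] := @sum_pow_le1 R J J0 _ B p'0 p'1 ltac:(rewrite Bl ltW //).
    lra.
  have [T1 T2] := @sum_pow_ge1 R J J0 _ _ p0 p1 (ltW Bg).
  have [T3 T4] := @sum_pow_ge1 R J J0 _ _ p'0 p'1 (ltW Bg).
  lra.
have H3 := ler_wpM2l c0 HT.
set a := (1 + beta) / B in H3 *.
set S := \sum_j p j `^ (1 + beta) in H2 *.
set S' := \sum_j p' j `^ (1 + beta) in H1 *.
set T := \sum_k p k `^ B in H3 *.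
set T' := \sum_k p' k `^ B in H3 *.
have -> : J%:R * S + J%:R * J%:R * (A / B) - a * T -
  (J%:R * S' + J%:R * J%:R * (A / B) - a * T') =
  J%:R * S - J%:R * S' + (a * (T' - T)) by ring.
lra.
Qed.

End Loss.

Lemma sub_le_addr (R : realDomainType) (a b c : R) : a - b <= c -> a <= b + c.
Proof. lra. Qed.
Lemma add_le_subr (R : realDomainType) (a b c : R) : a <= b + c -> a - b <= c.
Proof. lra. Qed.

Lemma final_step (R : realFieldType) (j eta rge rgs rue rus Dc : R) :
  1 < j -> 0 <= eta -> eta < 1 - j^-1 ->
  (1 - eta - eta / (j - 1)) * rge + eta / (j - 1) * rue <=
  (1 - eta - eta / (j - 1)) * rgs + eta / (j - 1) * rus ->
  rus - rue <= Dc -> rge - rgs <= eta / ((j - 1) - j * eta) * Dc.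
Proof.
move=> j1 e0 el h2 Du.
have j0 : 0 < j by lra.
have jm : 0 < j - 1 by lra.
have Q0 : 0 < (j - 1) - j * eta.
  move: el; rewrite -(ltr_pM2l j0) mulrBr mulr1 mulfV ?gt_eqF //; lra.
have c'0 : 0 <= eta / (j - 1) by rewrite divr_ge0 // ltW.
have hX : (1 - eta - eta / (j - 1)) * (rge - rgs) <= eta / (j - 1) * Dc.
  have := ler_wpM2l c'0 Du; lra.
have e1 : (j - 1) * ((1 - eta - eta / (j - 1)) * (rge - rgs)) =
   ((j - 1) - j * eta) * (rge - rgs) by field; nzs.
have e2 : (j - 1) * (eta / (j - 1) * Dc) = eta * Dc by field; nzs.
have := ler_wpM2l (ltW jm) hX; rewrite e1 e2 => hQ.
rewrite mulrAC ler_pdivlMr //; lra.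
Qed.

Lemma powR_le1 (R : realType) (a s : R) : 0 < a <= 1 -> 0 <= s -> a `^ s <= 1.
Proof. by move=> Ha s0; rewrite -(powRr0 a); exact: ger_powR. Qed.

Lemma sumexp_gt0 (R : realType) (J : nat) (z : 'I_J -> R) : (0 < J)%N ->
  0 < \sum_k expR (z k).
Proof.
move=> J0; apply: (lt_le_trans (expR_gt0 (z (Ordinal J0)))).
rewrite (bigD1 (Ordinal J0)) //= lerDl sumr_ge0 // => i _; exact/ltW/expR_gt0.
Qed.

Lemma softmax_gt0 (R : realType) (J : nat) (z : 'I_J -> R) j : (0 < J)%N ->
  0 < softmax z j.
Proof. by move=> J0; rewrite /softmax divr_gt0 ?expR_gt0 ?sumexp_gt0. Qed.

Lemma softmax_sum (R : realType) (J : nat) (z : 'I_J -> R) : (0 < J)%N ->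
  \sum_j softmax z j = 1.
Proof.
move=> J0; rewrite /softmax -mulr_suml mulfV //; exact/lt0r_neq0/sumexp_gt0.
Qed.

Lemma loss_bound (R : realType) (J : nat) (beta lambda : R) (p : 'I_J -> R) k :
  0 <= beta -> 0 < SD_B beta lambda -> (forall i, 0 < p i <= 1) ->
  `|SD_loss beta lambda (onehot k) p| <=
  `|(SD_A beta lambda)^-1| * (J%:R * (1 + `|(1 + beta) / SD_B beta lambda|
     + `|SD_A beta lambda / SD_B beta lambda|)).
Proof.
move=> b0 B0 hp; rewrite /SD_loss normrM ler_wpM2l //.
apply: (le_trans (ler_norm_sum _ _ _)).
set C := (1 + _ + _).
have bj : forall j, `|p j `^ (1 + beta) - (1 + beta) / SD_B beta lambda * onehot k j * p j `^ SD_B beta lambda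
   + SD_A beta lambda / SD_B beta lambda| <= C.
  move=> j; apply: (le_trans (ler_normD _ _)); rewrite lerD2r.
  apply: (le_trans (ler_normB _ _)); rewrite lerD //.
    rewrite ger0_norm ?powR_ge0 //; apply: powR_le1 => //; lra.
  rewrite !normrM -[X in _ <= X]mulr1 -mulrA ler_wpM2l //.
  have e1 : `|onehot k j : R| <= 1 by rewrite /onehot; case: (j == k); rewrite ?normr0 ?normr1.
  have e2 : `|p j `^ SD_B beta lambda| <= 1.
    by rewrite ger0_norm ?powR_ge0 //; apply: powR_le1 => //; apply: ltW.
  by apply: (le_trans (ler_pM _ _ e1 e2)); rewrite ?mulr1.
apply: (le_trans (ler_sum _ (fun j _ => bj j))).
by rewrite sumr_const card_ord mulr_natl.
Qed.

Lemma int_bdd (R : realType) (d : measure_display) (T : measurableType d)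
  (P : probability T R) (phi : T -> R) (K : R) :
  measurable_fun setT phi -> (forall x, `|phi x| <= K) ->
  P.-integrable setT (EFin \o phi).
Proof.
move=> mphi hK; apply: measurable_bounded_integrable => //.
  apply: (le_lt_trans (probability_le1 P measurableT)); exact: ltry.
rewrite /bounded_near; near=> M => x _ /=.
apply: (le_trans (hK x)); near: M; exact: (nbhs_pinfty_ge (num_real K)).
Unshelve. all: end_near. Qed.

Theorem theorem3 (R : realType) (d : measure_display) (T : measurableType d)
  (P : probability T R) (J : nat) (Theta : Type)
  (f : Theta -> T -> 'I_J -> R) (pstar : T -> 'I_J -> R)
  (beta lambda eta : R) (th_star th_eta : Theta) :
  in_T beta lambda -> (2 <= J)%N -> 0 <= eta -> eta < 1 - (J%:R)^-1 ->
  (forall th j, measurable_fun setT (fun x => f th x j)) ->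
  (forall j, measurable_fun setT (fun x => pstar x j)) ->
  (forall x j, 0 <= pstar x j) ->
  (forall x, \sum_(j < J) pstar x j = 1) ->
  (forall th, (exp_risk P beta lambda pstar (fun x => softmax (f th_star x))
               <= exp_risk P beta lambda pstar (fun x => softmax (f th x)))%E) ->
  (forall th, (exp_risk P beta lambda (fun x => noisy_prob eta (pstar x))
                 (fun x => softmax (f th_eta x))
               <= exp_risk P beta lambda (fun x => noisy_prob eta (pstar x))
                 (fun x => softmax (f th x)))%E) ->
  (0 <= exp_risk P beta lambda pstar (fun x => softmax (f th_eta x))
        - exp_risk P beta lambda pstar (fun x => softmax (f th_star x)))%E /\
  (exp_risk P beta lambda pstar (fun x => softmax (f th_eta x))
        - exp_risk P beta lambda pstar (fun x => softmax (f th_star x))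
   <= (M_bound J beta lambda eta)%:E)%E.
Proof.
move=> hT J2 eta0 etalt mf mps ps0 ps1 H1 H2.
have J0 : (0 < J)%N by apply: leq_trans J2.
have [b0 [b1 [A0 B0]]] : 0 <= beta /\ beta <= 1 /\ 0 < SD_A beta lambda /\ 0 < SD_B beta lambda.
  case: hT => [[b0 [b1 [l1 l2]]]|->]; last first.
    by rewrite /SD_A /SD_B subrr !mulr0 addr0 subr0; split => //; lra.
  have h : 0 < 1 - beta by lra.
  rewrite -(ltr_pM2r h) mulNr mulVf ?gt_eqF // in l1.
  rewrite -(ltr_pM2r h) divfK ?gt_eqF // in l2.
  by rewrite /SD_A /SD_B; split => //; split; [lra|split; lra].
pose sm th x := softmax (f th x).
pose ell th k x := SD_loss beta lambda (onehot k) (sm th x).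
pose g th x := \sum_k pstar x k * ell th k x.
pose u th x := \sum_k ell th k x.
have smpos th x j : 0 < sm th x j <= 1.
  rewrite softmax_gt0 //=; apply: le1_of_sum => //.
    by move=> i; exact/ltW/softmax_gt0.
  exact: softmax_sum.
have msm th j : measurable_fun setT (fun x => sm th x j).
  have -> : (fun x => sm th x j) =
     (fun x => expR (f th x j) * (\sum_k expR (f th x k)) `^ (-1)).
    apply/funext => x; rewrite /sm /softmax powR_inv1 //; exact/ltW/sumexp_gt0.
  apply: (@measurable_funM _ _ _ _ (fun x => expR (f th x j))
      (fun x => (\sum_k expR (f th x k)) `^ (-1))).
    by apply: measurableT_comp => //; exact: mf.
  apply: (@measurableT_comp _ _ _ _ _ _ (fun y : R => y `^ (-1)) _
     (fun x => \sum_k expR (f th x k))); first exact: measurable_powR.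
  by apply: measurable_sum => k; apply: measurableT_comp => //; exact: mf.
have mpow th j s : measurable_fun setT (fun x => sm th x j `^ s).
  by apply: (@measurableT_comp _ _ _ _ _ _ (fun y : R => y `^ s) _ (fun x => sm th x j));
    [exact: measurable_powR|exact: msm].
have mell th k : measurable_fun setT (ell th k).
  rewrite /ell /SD_loss; apply: measurable_funM; first exact: measurable_cst.
  apply: measurable_sum => j; apply: measurable_funD; last exact: measurable_cst.
  apply: measurable_funB; first exact: mpow.
  apply: measurable_funM; first exact: measurable_cst.
  exact: mpow.
set L := `|(SD_A beta lambda)^-1| * (J%:R * (1 + `|(1 + beta) / SD_B beta lambda|
     + `|SD_A beta lambda / SD_B beta lambda|)).
have bell th k x : `|ell th k x| <= L by apply: loss_bound.
have L0 : 0 <= L.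
  by rewrite /L mulr_ge0 // mulr_ge0 ?ler0n // !addr_ge0.
have intg th : P.-integrable setT (EFin \o g th).
  apply: (@int_bdd R d T P _ L).
    apply: measurable_sum => k; apply: measurable_funM; [exact: mps | exact: mell].
  move=> x; rewrite /g; apply: (le_trans (ler_norm_sum _ _ _)).
  apply: (@le_trans _ _ (\sum_k pstar x k * L)).
    apply: ler_sum => k _; rewrite normrM ger0_norm //; exact: ler_wpM2l.
  by rewrite -mulr_suml ps1 mul1r.
have intu th : P.-integrable setT (EFin \o u th).
  apply: (@int_bdd R d T P _ (J%:R * L)).
    by apply: measurable_sum => k; exact: mell.
  move=> x; apply: (le_trans (ler_norm_sum _ _ _)).
  apply: (le_trans (ler_sum _ (fun k _ => bell th k x))).
  by rewrite sumr_const card_ord mulr_natl.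
pose rg th := fine (\int[P]_x (g th x)%:E).
pose ru th := fine (\int[P]_x (u th x)%:E).
have Eg th : (\int[P]_x (g th x)%:E = (rg th)%:E)%E.
  by rewrite /rg fineK //; exact: (integrable_fin_num measurableT (intg th)).
have Eu th : (\int[P]_x (u th x)%:E = (ru th)%:E)%E.
  by rewrite /ru fineK //; exact: (integrable_fin_num measurableT (intu th)).
have R1 th : exp_risk P beta lambda pstar (fun x => softmax (f th x)) = (rg th)%:E.
  by rewrite -Eg.
pose c' := eta / (J - 1)%:R.
pose al := 1 - eta - c'.
have Rn th : exp_risk P beta lambda (fun x => noisy_prob eta (pstar x))
    (fun x => softmax (f th x)) = (al * rg th + c' * ru th)%:E.
  transitivity (\int[P]_x (al%:E * (EFin \o g th) x + c'%:E * (EFin \o u th) x))%E.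
    rewrite /exp_risk; apply: eq_integral => x _ /=.
    rewrite -EFinM -EFinM -EFinD; congr EFin.
    rewrite /g /u !mulr_sumr -big_split; apply: eq_bigr => k _ /=.
    rewrite /noisy_prob /ell /sm /al /c'; ring.
  rewrite integralD //; [|exact: integrableZl|exact: integrableZl].
  rewrite integralZl //.
  rewrite integralZl //.
  by rewrite Eg Eu -!EFinM -EFinD.
pose Dc := (SD_A beta lambda)^-1 * (J%:R - J%:R `^ (1 - beta)
    + (1 + beta) / SD_B beta lambda * `|1 - J%:R `^ (1 - SD_B beta lambda)|).
have Du : ru th_star - ru th_eta <= Dc.
  have le1 : (\int[P]_x (u th_star x)%:E <=
             \int[P]_x ((u th_eta x)%:E + cst Dc%:E x))%E.
    apply: le_integral => //.
    - exact: intu.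
    - apply: integrableD => //; [exact: intu|exact: finite_measure_integrable_cst].
    move=> x _ /=; rewrite -EFinD lee_fin.
    have := @u_diff R J beta lambda (sm th_star x) (sm th_eta x) J0 A0 B0
      ltac:(by rewrite b0 b1) (fun i => proj1 (andP (smpos th_star x i)))
      (@softmax_sum R J _ J0) (fun i => proj1 (andP (smpos th_eta x i))) (@softmax_sum R J _ J0).
    rewrite /u /ell -/Dc; exact: sub_le_addr.
  rewrite integralD // in le1; [|exact: intu|exact: finite_measure_integrable_cst].
  have IC : (\int[P]_x cst Dc%:E x = Dc%:E)%E.
    by rewrite integral_cst // -[RHS]mule1; congr (_ * _)%E; exact: probability_setT.
  rewrite IC Eu Eu -EFinD lee_fin in le1.
  exact: add_le_subr.
have h1 := H1 th_eta; have h2 := H2 th_star.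
rewrite !R1 lee_fin in h1; rewrite !Rn lee_fin in h2.
rewrite !R1 -EFinB !lee_fin subr_ge0; split => //.
rewrite /al /c' natrB // ?ltnW // in h2.
rewrite /M_bound -/Dc.
apply: (@final_step R J%:R eta _ _ _ _ Dc _ eta0 etalt h2 Du).
by rewrite ltr1n.
Qed.
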